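(* Let $R=R_1\times R_2$ be a direct product of two finite commutative local rings with identity, and let $I=I_1\times I_2$ where $I_1$ is a proper ideal of $R_1$ and $I_2$ is a proper ideal of $R_2$. If the vertex set of $\Gamma''_{I_1}(R_1)$ or the vertex set of $\Gamma''_{I_2}(R_2)$ has more than one element, then $\Gamma''_I(R)$ is not planar.
   Context: The product has componentwise operations. For a commutative ring $S$ and an ideal $J$ of $S$, $\Gamma''_J(S)$ is the simple undirected graph whose vertex set is $\{x\in S\setminus J : xS+J\neq S\}$, with distinct vertices $x,y$ adjacent if and only if $x\notin yS+J$ and $y\notin xS+J$. A graph is planar if it can be drawn in the plane with edges meeting only at their endpoints. *)

(* Defs.v *)
From HB Require Import structures.
From mathcomp Require Import all_boot all_order all_algebra.
From mathcomp Require Import Rstruct.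
From Stdlib Require Import Rdefinitions.
Notation R := Rdefinitions.R.
Set Implicit Arguments. Unset Strict Implicit. Unset Printing Implicit Defensive.
Import Order.TTheory GRing.Theory Num.Theory.
Local Open Scope ring_scope.

Definition is_ideal (S : finComNzRingType) (J : {set S}) : Prop :=
  0 \in J /\ (forall x y, x \in J -> y \in J -> x - y \in J) /\
  (forall s x, x \in J -> s * x \in J).

Definition proper_ideal_of (S : finComNzRingType) (J : {set S}) : Prop :=
  is_ideal J /\ J != [set: S].

(* S is a local ring: its non-units form an ideal (equivalently S has a
   unique maximal ideal); S is nonzero since it is an NzRing. *)
Definition local_ring (S : finComNzRingType) : Prop :=
  is_ideal [set x : S | ~~ [exists y : S, x * y == 1]].

Definition xSJ (S : finComNzRingType) (J : {set S}) (x : S) : {set S} :=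
  [set y | [exists s : S, [exists j in J, y == x * s + j]]].

Definition G2_vertices (S : finComNzRingType) (J : {set S}) : {set S} :=
  [set x | (x \notin J) && (xSJ J x != [set: S])].

Definition G2_adj (S : finComNzRingType) (J : {set S}) (x y : S) : bool :=
  [&& x \in G2_vertices J, y \in G2_vertices J, x != y,
      x \notin xSJ J y & y \notin xSJ J x].

Definition point := (R * R)%type.

Definition in01 (t : R) : Prop := 0 <= t <= 1.

Definition path_cont (g : R -> point) : Prop :=
  forall t, in01 t -> forall eps : R, 0 < eps -> exists2 d : R, 0 < d &
    forall s, in01 s -> `|s - t| < d ->
      `|(g s).1 - (g t).1| < eps /\ `|(g s).2 - (g t).2| < eps.

(* Arcs are given for ordered
   pairs; arc u v and arc v u both draw the edge {u,v}. *)
Definition planar (T : finType) (V : {set T}) (e : rel T) : Prop :=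
  exists (f : T -> point) (arc : T -> T -> R -> point),
    {in V &, injective f} /\
    (forall u v, e u v ->
       [/\ path_cont (arc u v), arc u v 0 = f u, arc u v 1 = f v,
           (forall s t, in01 s -> in01 t -> arc u v s = arc u v t -> s = t)
         & forall w t, w \in V -> in01 t -> arc u v t = f w ->
             (w = u /\ t = 0) \/ (w = v /\ t = 1)]) /\
    (forall u v u' v', e u v -> e u' v' ->
       ~ ((u = u' /\ v = v') \/ (u = v' /\ v = u')) ->
       forall s t, in01 s -> in01 t -> arc u v s = arc u' v' t ->
         exists2 w, (w = u \/ w = v) /\ (w = u' \/ w = v') & arc u v s = f w).

(* Equip the product of two finite commutative rings with its (componentwise)
   finite commutative ring structure. *)
HB.saturate prod.

(* Main.v *)
Require Import Defs.
From HB Require Import structures.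
From mathcomp Require Import Rstruct.
From Stdlib Require Import Reals Lra Lia.
Open Scope R_scope.

Definition pt := (R * R)%type.
Definition dotp (x y : pt) := fst x * fst y + snd x * snd y.
Definition crs (x y : pt) := fst x * snd y - snd x * fst y.
Definition psub (x y : pt) : pt := (fst x - fst y, snd x - snd y).
Definition parg (x y : pt) : R := atan (crs x y / dotp x y).

Definition Eprop (t : R) (x y : pt) :=
  exists l, 0 < l /\ cos t = l * dotp x y /\ sin t = l * crs x y.

Definition in2piZ (x : R) := exists k : Z, x = 2 * PI * IZR k.

Lemma in2piZ_add x y : in2piZ x -> in2piZ y -> in2piZ (x + y).
Proof. intros [a Ha] [b Hb]; exists (a + b)%Z; rewrite plus_IZR; subst; ring. Qed.
Lemma in2piZ_opp x : in2piZ x -> in2piZ (- x).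
Proof. intros [a Ha]; exists (- a)%Z; rewrite opp_IZR; subst; ring. Qed.
Lemma in2piZ_0 : in2piZ 0.
Proof. exists 0%Z; simpl; ring. Qed.

Lemma cos1_2piZ t : cos t = 1 -> in2piZ t.
Proof.
  intros H.
  assert (Hs : sin (t/2) = 0).
  { assert (E := cos_2a_sin (t/2)). replace (2 * (t/2)) with t in E by field.
    assert (sin (t/2) * sin (t/2) = 0) by lra.
    destruct (Rmult_integral _ _ H0); auto. }
  destruct (sin_eq_0_0 _ Hs) as [k Hk]. exists k. lra.
Qed.

Lemma Eprop_parg x y : 0 < dotp x y -> Eprop (parg x y) x y.
Proof.
  intros H. unfold parg.
  set (u := crs x y / dotp x y).
  assert (Hq : 0 < sqrt (1 + u²)).
  { apply sqrt_lt_R0. pose proof (Rle_0_sqr u). lra. }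
  exists (1 / (dotp x y * sqrt (1 + u²))). split.
  { apply Rdiv_lt_0_compat; [lra| apply Rmult_lt_0_compat; lra]. }
  assert (Hu : u * dotp x y = crs x y) by (unfold u; field; lra).
  clearbody u. rewrite cos_atan, sin_atan. rewrite <- Hu. split; field; lra.
Qed.

Lemma dotcrs_sq x y : (dotp x y)² + (crs x y)² = ((fst x)² + (snd x)²) * ((fst y)² + (snd y)²).
Proof. unfold dotp, crs, Rsqr; ring. Qed.

Lemma Eprop_comp a b x y z : Eprop a x y -> Eprop b y z -> y <> (0,0) -> Eprop (a + b) x z.
Proof.
  intros [l [Hl [Hc Hs]]] [m [Hm [Hc' Hs']]] Hy.
  assert (Hy2 : 0 < (fst y)² + (snd y)²).
  { destruct y as [y1 y2]; simpl.
    destruct (Req_dec y1 0); destruct (Req_dec y2 0); subst;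
    try (exfalso; apply Hy; reflexivity);
    unfold Rsqr; nra. }
  exists (l * m * ((fst y)² + (snd y)²)). split.
  { apply Rmult_lt_0_compat; [apply Rmult_lt_0_compat|]; lra. }
  rewrite cos_plus, sin_plus, Hc, Hs, Hc', Hs'. unfold dotp, crs, Rsqr; split; ring.
Qed.

Lemma dot_pos_nz x y : 0 < dotp x y -> x <> (0,0) /\ y <> (0,0).
Proof.
  intros H; split; intros E; subst; unfold dotp in H; simpl in H; lra.
Qed.

Lemma Eprop_same a b x y : Eprop a x y -> Eprop b x y -> x <> (0,0) -> y <> (0,0) ->
  in2piZ (a - b).
Proof.
  intros [l [Hl [Hc Hs]]] [m [Hm [Hc' Hs']]] Hx Hy.
  assert (Hx2 : 0 < (fst x)² + (snd x)²).
  { destruct x as [y1 y2]; simpl.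
    destruct (Req_dec y1 0); destruct (Req_dec y2 0); subst;
    try (exfalso; apply Hx; reflexivity); unfold Rsqr; nra. }
  assert (Hy2 : 0 < (fst y)² + (snd y)²).
  { destruct y as [y1 y2]; simpl.
    destruct (Req_dec y1 0); destruct (Req_dec y2 0); subst;
    try (exfalso; apply Hy; reflexivity); unfold Rsqr; nra. }
  assert (HD := dotcrs_sq x y).
  assert (HP : 0 < (dotp x y)² + (crs x y)²).
  { rewrite HD. apply Rmult_lt_0_compat; lra. }
  assert (E1 := sin2_cos2 a). assert (E2 := sin2_cos2 b).
  rewrite Hc, Hs in E1. rewrite Hc', Hs' in E2.
  set (P := (dotp x y)² + (crs x y)²) in *.
  assert (El : l * l * P = 1) by (unfold P, Rsqr in *; nra).
  assert (Em : m * m * P = 1) by (unfold P, Rsqr in *; nra).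
  assert (Hlm : l * l = m * m).
  { apply Rmult_eq_reg_r with P; lra. }
  assert (l = m) by nra. subst m.
  apply cos1_2piZ. unfold Rminus. rewrite cos_plus, cos_neg, sin_neg.
  rewrite Hc, Hs, Hc', Hs'. unfold Rsqr in E1. nra.
Qed.

Lemma Eprop_neg_l a x y : Eprop a x y -> Eprop (- a) y x.
Proof.
  intros [l [Hl [Hc Hs]]]. exists l. split; [lra|].
  rewrite cos_neg, sin_neg, Hc, Hs. unfold dotp, crs; split; ring.
Qed.

Lemma Eprop_0 x : x <> (0,0) -> Eprop 0 x x.
Proof.
  intros Hx.
  assert (Hx2 : 0 < (fst x)² + (snd x)²).
  { destruct x as [y1 y2]; simpl.
    destruct (Req_dec y1 0); destruct (Req_dec y2 0); subst;
    try (exfalso; apply Hx; reflexivity); unfold Rsqr; nra. }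
  exists (1 / ((fst x)² + (snd x)²)). split.
  { apply Rdiv_lt_0_compat; lra. }
  rewrite cos_0, sin_0. unfold dotp, crs, Rsqr in *. split; field; lra.
Qed.

Lemma parg_bound x y : - (PI/2) < parg x y < PI/2.
Proof. unfold parg. destruct (atan_bound (crs x y / dotp x y)). lra. Qed.

Lemma parg_anti x y : parg y x = - parg x y.
Proof.
  unfold parg. rewrite <- atan_opp. f_equal.
  replace (dotp y x) with (dotp x y) by (unfold dotp; ring).
  replace (crs y x) with (- crs x y) by (unfold crs; ring).
  unfold Rdiv; ring.
Qed.

Lemma psub_anti a b : psub b a = (- fst (psub a b), - snd (psub a b)).
Proof. unfold psub; simpl; f_equal; ring. Qed.

Lemma parg_neg x y : parg (- fst x, - snd x) (- fst y, - snd y) = parg x y.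
Proof. unfold parg, crs, dotp; simpl. f_equal. f_equal; [ring| f_equal; ring]. Qed.

Lemma cell x1 x2 x3 x4 :
  0 < dotp x1 x2 -> 0 < dotp x2 x3 -> 0 < dotp x3 x4 -> 0 < dotp x4 x1 ->
  parg x1 x2 + parg x2 x3 + parg x3 x4 + parg x4 x1 = 0.
Proof.
  intros H1 H2 H3 H4.
  destruct (dot_pos_nz _ _ H1) as [N1 N2].
  destruct (dot_pos_nz _ _ H3) as [N3 N4].
  assert (E : Eprop (parg x1 x2 + parg x2 x3 + parg x3 x4 + parg x4 x1) x1 x1).
  { apply Eprop_comp with x4; auto.
    apply Eprop_comp with x3; auto.
    apply Eprop_comp with x2; auto.
    all: apply Eprop_parg; auto. }
  destruct (Eprop_same _ _ _ _ E (Eprop_0 _ N1) N1 N1) as [k Hk].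
  pose proof (parg_bound x1 x2). pose proof (parg_bound x2 x3).
  pose proof (parg_bound x3 x4). pose proof (parg_bound x4 x1).
  pose proof PI_RGT_0.
  assert (Hk1 : -1 < IZR k < 1).
  { split.
    - apply Rmult_lt_reg_l with (2 * PI); [lra|]. nra.
    - apply Rmult_lt_reg_l with (2 * PI); [lra|]. nra. }
  destruct Hk1 as [Ha Hb]. apply lt_IZR in Ha. apply lt_IZR in Hb.
  assert (k = 0%Z) by lia. subst k. simpl in Hk. lra.
Qed.
From Stdlib Require Import IndefiniteDescription.
Open Scope R_scope.

Fixpoint sumR (n : nat) (F : nat -> R) : R :=
  match n with O => 0 | S n => sumR n F + F n end.

Lemma sumR_ext n F G : (forall i, (i < n)%nat -> F i = G i) -> sumR n F = sumR n G.
Proof.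
  induction n; intros H; simpl; auto.
  rewrite IHn by (intros; apply H; lia). rewrite H by lia. reflexivity.
Qed.

Lemma chain (x : nat -> pt) n :
  (forall i, (i < n)%nat -> 0 < dotp (x i) (x (S i))) -> x O <> (0,0) ->
  Eprop (sumR n (fun i => parg (x i) (x (S i)))) (x O) (x n).
Proof.
  induction n; intros H H0; simpl.
  - apply Eprop_0; auto.
  - apply Eprop_comp with (x n).
    + apply IHn; [intros i Hi; apply H; lia | exact H0].
    + apply Eprop_parg. apply H; lia.
    + destruct (dot_pos_nz _ _ (H n (Nat.lt_succ_diag_r n))); auto.
Qed.

Definition theta (N : nat) (g : R -> pt) (p : pt) : R :=
  sumR N (fun i => parg (psub (g (INR i / INR N)) p) (psub (g (INR (S i) / INR N)) p)).

Definition e1 : pt := (1, 0).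

Definition ang (w : pt) : R :=
  if Rlt_dec 0 (fst w) then parg e1 w
  else if Rlt_dec (fst w) 0 then parg e1 (- fst w, - snd w) + PI
  else if Rlt_dec 0 (snd w) then PI / 2 else - (PI / 2).

Lemma Eprop_pi a x y : Eprop a x y -> Eprop (a + PI) x (- fst y, - snd y).
Proof.
  intros [l [Hl [Hc Hs]]]. exists l. split; auto.
  rewrite cos_plus, sin_plus, cos_PI, sin_PI, Hc, Hs. unfold dotp, crs; simpl; split; ring.
Qed.

Lemma ang_E w : w <> (0,0) -> Eprop (ang w) e1 w.
Proof.
  intros Hw. destruct w as [w1 w2]. unfold ang; simpl.
  destruct (Rlt_dec 0 w1).
  { apply Eprop_parg. unfold dotp, e1; simpl; lra. }
  destruct (Rlt_dec w1 0).
  { replace (w1, w2) with (- fst (- w1, - w2), - snd (- w1, -w2)) by (simpl; f_equal; ring).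
    apply Eprop_pi. apply Eprop_parg. unfold dotp, e1; simpl; lra. }
  assert (w1 = 0) by lra. subst w1.
  destruct (Rlt_dec 0 w2).
  { exists (1 / w2). split. apply Rdiv_lt_0_compat; lra.
    rewrite cos_PI2, sin_PI2. unfold dotp, crs, e1; simpl; split; field; lra. }
  assert (w2 <> 0) by (intro; subst; apply Hw; reflexivity).
  exists (- (1 / w2)). split. assert (w2 < 0) by lra.
  assert (0 < - (1/w2)). { unfold Rdiv. rewrite Rmult_1_l. apply Ropp_0_gt_lt_contravar. apply Rinv_lt_0_compat. lra. } lra.
  rewrite cos_neg, sin_neg, cos_PI2, sin_PI2. unfold dotp, crs, e1; simpl; split; field; lra.
Qed.

Lemma e1_nz : e1 <> (0,0).
Proof. unfold e1; intro H; inversion H; lra. Qed.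

Lemma ang_rel t x y : Eprop t x y -> x <> (0,0) -> y <> (0,0) ->
  in2piZ (t - (ang y - ang x)).
Proof.
  intros H Hx Hy.
  assert (E : Eprop (- ang x + ang y) x y).
  { apply Eprop_comp with e1. apply Eprop_neg_l, ang_E; auto. apply ang_E; auto. apply e1_nz. }
  replace (ang y - ang x) with (- ang x + ang y) by ring.
  apply (Eprop_same _ _ _ _ H E Hx Hy).
Qed.

Lemma ang_neg w : w <> (0,0) -> in2piZ (ang (- fst w, - snd w) - (ang w + PI)).
Proof.
  intros Hw.
  assert (Hw' : (- fst w, - snd w) <> (0,0)).
  { destruct w as [a b]; simpl; intro H; inversion H; apply Hw; f_equal; lra. }
  apply (Eprop_same _ _ e1 _ (ang_E _ Hw') (Eprop_pi _ _ _ (ang_E _ Hw)) e1_nz Hw').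
Qed.

Lemma psub_nz a b : a <> b -> psub a b <> (0,0).
Proof.
  destruct a as [a1 a2], b as [b1 b2]; unfold psub; simpl; intros H E; inversion E.
  apply H; f_equal; lra.
Qed.

Lemma dotp_sym x y : dotp x y = dotp y x.
Proof. unfold dotp; ring. Qed.

Section Grid.
Variable v : nat -> nat -> pt.
Variable N : nat.
Hypothesis HH : forall i j, (i < N)%nat -> (j <= N)%nat -> 0 < dotp (v i j) (v (S i) j).
Hypothesis HV : forall i j, (i <= N)%nat -> (j < N)%nat -> 0 < dotp (v i j) (v i (S j)).

Definition row j := sumR N (fun i => parg (v i j) (v (S i) j)).
Definition col i := sumR N (fun j => parg (v i j) (v i (S j))).

Lemma row_step j : (j < N)%nat -> row (S j) = row j + parg (v N j) (v N (S j)) - parg (v O j) (v O (S j)).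
Proof.
  intros Hj. unfold row.
  assert (forall n, (n <= N)%nat ->
    sumR n (fun i => parg (v i j) (v (S i) j)) - sumR n (fun i => parg (v i (S j)) (v (S i) (S j)))
    + parg (v n j) (v n (S j)) - parg (v O j) (v O (S j)) = 0).
  { induction n; intros Hn; simpl. ring.
    assert (C := cell (v n j) (v (S n) j) (v (S n) (S j)) (v n (S j))).
    rewrite (parg_anti (v n (S j)) (v (S n) (S j))), (parg_anti (v n j) (v n (S j))) in C.
    assert (D1 := HH n j ltac:(lia) ltac:(lia)).
    assert (D2 := HV (S n) j ltac:(lia) Hj).
    assert (D3 := HH n (S j) ltac:(lia) ltac:(lia)).
    assert (D4 := HV n j ltac:(lia) Hj).
    rewrite dotp_sym in D3. rewrite dotp_sym in D4.
    specialize (C D1 D2 D3 D4).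
    specialize (IHn ltac:(lia)). lra. }
  specialize (H N (le_n N)). lra.
Qed.

Lemma grid_tele : row N - row O - col N + col O = 0.
Proof.
  assert (forall j, (j <= N)%nat -> row j = row O + sumR j (fun k => parg (v N k) (v N (S k)))
                                         - sumR j (fun k => parg (v O k) (v O (S k)))).
  { induction j; intros Hj; simpl. ring. rewrite row_step by lia. rewrite IHj by lia. ring. }
  rewrite (H N (le_n N)). unfold col. ring.
Qed.
End Grid.
Definition cl (t : R) : R := if Rle_dec t 0 then 0 else if Rle_dec t 1 then t else 1.

Lemma cl_in t : 0 <= cl t <= 1.
Proof. unfold cl; destruct (Rle_dec t 0); [lra|]; destruct (Rle_dec t 1); lra. Qed.
Lemma cl_id t : 0 <= t <= 1 -> cl t = t.
Proof. intros H; unfold cl; destruct (Rle_dec t 0); [lra|]; destruct (Rle_dec t 1); lra. Qed.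
Lemma cl_lip s t : Rabs (cl s - cl t) <= Rabs (s - t).
Proof.
  unfold cl; destruct (Rle_dec s 0); destruct (Rle_dec t 0);
  try destruct (Rle_dec s 1); try destruct (Rle_dec t 1);
  unfold Rabs; repeat destruct Rcase_abs; lra.
Qed.

Definition pc (g : R -> pt) := forall t, 0 <= t <= 1 -> forall eps, 0 < eps ->
  exists d, 0 < d /\ forall s, 0 <= s <= 1 -> Rabs (s - t) < d ->
    Rabs (fst (g s) - fst (g t)) < eps /\ Rabs (snd (g s) - snd (g t)) < eps.

Lemma eps_cont_pt (h : R -> R) x :
  (forall eps, 0 < eps -> exists d, 0 < d /\ forall y, Rabs (y - x) < d -> Rabs (h y - h x) < eps) ->
  continuity_pt h x.
Proof.
  intros H eps Heps. destruct (H eps Heps) as [d [Hd Hy]]. exists d. split; [lra|].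
  intros y [_ Hyx]. simpl in *. unfold R_dist in *. apply Hy; auto.
Qed.

Lemma pc_cl g : pc g -> forall x eps, 0 < eps -> exists d, 0 < d /\ forall y, Rabs (y - x) < d ->
  Rabs (fst (g (cl y)) - fst (g (cl x))) < eps /\ Rabs (snd (g (cl y)) - snd (g (cl x))) < eps.
Proof.
  intros Hg x eps He. destruct (Hg (cl x) (cl_in x) eps He) as [d [Hd H]].
  exists d; split; auto. intros y Hy. apply H. apply cl_in.
  eapply Rle_lt_trans. apply cl_lip. auto.
Qed.

Lemma unif g : pc g -> forall eps, 0 < eps -> exists d, 0 < d /\
  forall s s', 0 <= s <= 1 -> 0 <= s' <= 1 -> Rabs (s - s') < d ->
    Rabs (fst (g s) - fst (g s')) < eps /\ Rabs (snd (g s) - snd (g s')) < eps.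
Proof.
  intros Hg eps He.
  assert (U1 := Heine (fun y => fst (g (cl y))) (fun c => 0 <= c <= 1) (compact_P3 0 1)).
  assert (U2 := Heine (fun y => snd (g (cl y))) (fun c => 0 <= c <= 1) (compact_P3 0 1)).
  destruct (U1 ltac:(intros x _; apply eps_cont_pt; intros e' He';
                    destruct (pc_cl g Hg x e' He') as [d [Hd Hh]]; exists d; split; auto;
                    intros y Hy; apply (Hh y Hy)) (mkposreal eps He)) as [d1 Hd1].
  destruct (U2 ltac:(intros x _; apply eps_cont_pt; intros e' He';
                    destruct (pc_cl g Hg x e' He') as [d [Hd Hh]]; exists d; split; auto;
                    intros y Hy; apply (Hh y Hy)) (mkposreal eps He)) as [d2 Hd2].
  exists (Rmin d1 d2). split. { apply Rmin_pos; apply cond_pos. }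
  intros s s' Hs Hs' Hss.
  specialize (Hd1 s s' Hs Hs' ltac:(eapply Rlt_le_trans; [apply Hss| apply Rmin_l])).
  specialize (Hd2 s s' Hs Hs' ltac:(eapply Rlt_le_trans; [apply Hss| apply Rmin_r])).
  simpl in Hd1, Hd2. rewrite !cl_id in Hd1, Hd2 by auto. auto.
Qed.

Definition dinf (x y : pt) := Rmax (Rabs (fst x - fst y)) (Rabs (snd x - snd y)).

Lemma dinf_tri x y z : dinf x z <= dinf x y + dinf y z.
Proof.
  unfold dinf. apply Rmax_lub.
  - replace (fst x - fst z) with ((fst x - fst y) + (fst y - fst z)) by ring.
    eapply Rle_trans; [apply Rabs_triang|]. apply Rplus_le_compat; apply Rmax_l.
  - replace (snd x - snd z) with ((snd x - snd y) + (snd y - snd z)) by ring.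
    eapply Rle_trans; [apply Rabs_triang|]. apply Rplus_le_compat; apply Rmax_r.
Qed.

Lemma dinf_sym x y : dinf x y = dinf y x.
Proof. unfold dinf. rewrite (Rabs_minus_sym (fst x)), (Rabs_minus_sym (snd x)). reflexivity. Qed.

Lemma dinf_pos x y : x <> y -> 0 < dinf x y.
Proof.
  destruct x as [x1 x2], y as [y1 y2]; unfold dinf; simpl; intros H.
  destruct (Req_dec x1 y1); destruct (Req_dec x2 y2).
  - subst; exfalso; auto.
  - eapply Rlt_le_trans; [|apply Rmax_r]. apply Rabs_pos_lt. lra.
  - eapply Rlt_le_trans; [|apply Rmax_l]. apply Rabs_pos_lt. lra.
  - eapply Rlt_le_trans; [|apply Rmax_l]. apply Rabs_pos_lt. lra.
Qed.

Lemma dinf_lt x y eps : Rabs (fst x - fst y) < eps -> Rabs (snd x - snd y) < eps -> dinf x y < eps.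
Proof. intros; unfold dinf; apply Rmax_lub_lt; auto. Qed.

Lemma mindist e f : pc e -> pc f ->
  (forall s t, 0 <= s <= 1 -> 0 <= t <= 1 -> e s <> f t) ->
  exists m, 0 < m /\ forall s t, 0 <= s <= 1 -> 0 <= t <= 1 -> m <= dinf (e s) (f t).
Proof.
  intros He Hf Hd.
  assert (Hex : forall s, exists t, (forall c, 0 <= c <= 1 ->
      dinf (e (cl s)) (f (cl t)) <= dinf (e (cl s)) (f (cl c))) /\ 0 <= t <= 1).
  { intros s. apply continuity_ab_min; [lra|].
    intros c _. apply eps_cont_pt. intros eps Heps.
    destruct (pc_cl f Hf c eps Heps) as [d [Hd0 Hh]]. exists d; split; auto.
    intros y Hy. destruct (Hh y Hy) as [A B].
    assert (T1 := dinf_tri (e (cl s)) (f (cl c)) (f (cl y))).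
    assert (T2 := dinf_tri (e (cl s)) (f (cl y)) (f (cl c))).
    assert (T3 : dinf (f (cl c)) (f (cl y)) < eps).
    { rewrite dinf_sym. apply dinf_lt; auto. }
    rewrite dinf_sym in T3. assert (T4 := T3). rewrite dinf_sym in T4.
    unfold Rabs at 1; destruct Rcase_abs; lra. }
  set (T := fun s => proj1_sig (constructive_indefinite_description _ (Hex s))).
  assert (HT : forall s, (forall c, 0 <= c <= 1 -> dinf (e (cl s)) (f (cl (T s))) <= dinf (e (cl s)) (f (cl c)))
                        /\ 0 <= T s <= 1).
  { intros s. unfold T. destruct (constructive_indefinite_description _ (Hex s)) as [t Ht]. simpl. auto. }
  set (M := fun s => dinf (e (cl s)) (f (cl (T s)))).
  assert (HM : forall s s', M s <= M s' + dinf (e (cl s)) (e (cl s'))).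
  { intros s s'. unfold M.
    destruct (HT s) as [H1 _]. destruct (HT s') as [_ H2].
    specialize (H1 (T s') H2).
    assert (X := dinf_tri (e (cl s)) (e (cl s')) (f (cl (T s')))). lra. }
  destruct (continuity_ab_min M 0 1 ltac:(lra)) as [smin [Hmin Hsmin]].
  { intros c _. apply eps_cont_pt. intros eps Heps.
    destruct (pc_cl e He c eps Heps) as [d [Hd0 Hh]]. exists d; split; auto.
    intros y Hy. destruct (Hh y Hy) as [A B].
    assert (Z1 := HM y c). assert (Z2 := HM c y).
    assert (T3 : dinf (e (cl y)) (e (cl c)) < eps) by (apply dinf_lt; auto).
    assert (T4 : dinf (e (cl c)) (e (cl y)) < eps) by (rewrite dinf_sym; auto).
    unfold Rabs at 1; destruct Rcase_abs; lra. }
  exists (M smin). split.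
  - unfold M. apply dinf_pos. apply Hd; [apply cl_in| apply cl_in].
  - intros s t Hs Ht. eapply Rle_trans; [apply (Hmin s Hs)|].
    unfold M. destruct (HT s) as [H1 _]. specialize (H1 t Ht).
    rewrite (cl_id t Ht), (cl_id s Hs) in H1. rewrite (cl_id s Hs). auto.
Qed.

Lemma close_dot a1 a2 b1 b2 m : 0 < m -> m <= Rmax (Rabs a1) (Rabs a2) ->
  Rabs (a1 - b1) < m / 2 -> Rabs (a2 - b2) < m / 2 -> 0 < a1 * b1 + a2 * b2.
Proof.
  intros Hm Hmax H1 H2.
  unfold Rmax in Hmax. destruct (Rle_dec (Rabs a1) (Rabs a2));
  revert Hmax H1 H2; unfold Rabs; repeat destruct Rcase_abs; intros; nra.
Qed.

Lemma good e f : pc e -> pc f ->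
  (forall s t, 0 <= s <= 1 -> 0 <= t <= 1 -> e s <> f t) ->
  exists d, 0 < d /\ forall s s' t t', 0 <= s <= 1 -> 0 <= s' <= 1 -> 0 <= t <= 1 -> 0 <= t' <= 1 ->
    Rabs (s - s') < d -> Rabs (t - t') < d ->
    0 < dotp (psub (e s) (f t)) (psub (e s') (f t')).
Proof.
  intros He Hf Hd.
  destruct (mindist e f He Hf Hd) as [m [Hm Hmd]].
  destruct (unif e He (m/4) ltac:(lra)) as [d1 [Hd1 U1]].
  destruct (unif f Hf (m/4) ltac:(lra)) as [d2 [Hd2 U2]].
  exists (Rmin d1 d2). split. apply Rmin_pos; auto.
  intros s s' t t' Hs Hs' Ht Ht' Hss Htt.
  destruct (U1 s s' Hs Hs' ltac:(eapply Rlt_le_trans; [apply Hss| apply Rmin_l])) as [A1 A2].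
  destruct (U2 t t' Ht Ht' ltac:(eapply Rlt_le_trans; [apply Htt| apply Rmin_r])) as [B1 B2].
  specialize (Hmd s t Hs Ht). unfold dinf in Hmd.
  unfold dotp, psub; simpl.
  apply close_dot with m; auto.
  - replace (fst (e s) - fst (f t) - (fst (e s') - fst (f t'))) with
      ((fst (e s) - fst (e s')) + - (fst (f t) - fst (f t'))) by ring.
    eapply Rle_lt_trans; [apply Rabs_triang|]. rewrite Rabs_Ropp. lra.
  - replace (snd (e s) - snd (f t) - (snd (e s') - snd (f t'))) with
      ((snd (e s) - snd (e s')) + - (snd (f t) - snd (f t'))) by ring.
    eapply Rle_lt_trans; [apply Rabs_triang|]. rewrite Rabs_Ropp. lra.
Qed.
Lemma dotp_flip a b p : dotp (psub a p) (psub b p) = dotp (psub p a) (psub p b).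
Proof. unfold dotp, psub; simpl; ring. Qed.

Lemma parg_flip a b p : parg (psub p a) (psub p b) = parg (psub a p) (psub b p).
Proof. rewrite (psub_anti a p), (psub_anti b p). apply parg_neg. Qed.

Lemma grid_pt i N : (0 < N)%nat -> (i <= N)%nat -> 0 <= INR i / INR N <= 1.
Proof.
  intros HN Hi. assert (0 < INR N) by (apply lt_0_INR; auto).
  assert (INR i <= INR N) by (apply le_INR; auto). assert (0 <= INR i) by apply pos_INR.
  split. unfold Rdiv. apply Rmult_le_pos; [lra| left; apply Rinv_0_lt_compat; lra].
  apply Rmult_le_reg_r with (INR N); auto. unfold Rdiv. rewrite Rmult_assoc, Rinv_l; lra.
Qed.

Lemma grid_step i N : (0 < N)%nat -> Rabs (INR i / INR N - INR (S i) / INR N) = / INR N.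
Proof.
  intros HN. assert (0 < INR N) by (apply lt_0_INR; auto).
  rewrite S_INR. replace (INR i / INR N - (INR i + 1) / INR N) with (- / INR N) by (field; lra).
  rewrite Rabs_Ropp. apply Rabs_right. left. apply Rinv_0_lt_compat; auto.
Qed.

Lemma grid0 N : INR 0 / INR N = 0.
Proof. simpl. unfold Rdiv. ring. Qed.
Lemma gridN N : (0 < N)%nat -> INR N / INR N = 1.
Proof. intros HN. assert (0 < INR N) by (apply lt_0_INR; auto). field. lra. Qed.

Lemma theta_E N g p : (0 < N)%nat ->
  (forall i, (i < N)%nat -> 0 < dotp (psub (g (INR i / INR N)) p) (psub (g (INR (S i) / INR N)) p)) ->
  psub (g 0) p <> (0,0) ->
  Eprop (theta N g p) (psub (g 0) p) (psub (g 1) p).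
Proof.
  intros HN H H0.
  assert (C := chain (fun i => psub (g (INR i / INR N)) p) N H).
  cbv beta in C. rewrite grid0, gridN in C by auto. apply C. cbv beta. replace (INR 0 / INR N) with 0 by (symmetry; apply grid0). auto.
Qed.

Lemma pair_rel e f : pc e -> pc f ->
  (forall s t, 0 <= s <= 1 -> 0 <= t <= 1 -> e s <> f t) ->
  exists N0, forall N, (N0 <= N)%nat -> (0 < N)%nat ->
  theta N e (f 1) - theta N e (f 0) - theta N f (e 1) + theta N f (e 0) = 0
  /\ in2piZ (theta N e (f 0) - (ang (psub (e 1) (f 0)) - ang (psub (e 0) (f 0))))
  /\ in2piZ (theta N e (f 1) - (ang (psub (e 1) (f 1)) - ang (psub (e 0) (f 1))))
  /\ in2piZ (theta N f (e 0) - (ang (psub (f 1) (e 0)) - ang (psub (f 0) (e 0))))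
  /\ in2piZ (theta N f (e 1) - (ang (psub (f 1) (e 1)) - ang (psub (f 0) (e 1)))).
Proof.
  intros He Hf Hd.
  destruct (good e f He Hf Hd) as [d [Hdp Hg]].
  destruct (archimed_cor1 d Hdp) as [N0 [HN0 HN0p]].
  exists N0. intros N HN HNp.
  assert (HNr : 0 < INR N) by (apply lt_0_INR; auto).
  assert (Hstep : / INR N < d).
  { eapply Rle_lt_trans; [|apply HN0]. apply Rinv_le_contravar. apply lt_0_INR; auto. apply le_INR; auto. }
  assert (Hst : forall i, Rabs (INR i / INR N - INR (S i) / INR N) < d).
  { intros i. rewrite grid_step; auto. }
  assert (Hz : forall x, Rabs (x - x) < d).
  { intros x. replace (x - x) with 0 by ring. rewrite Rabs_R0. auto. }
  assert (I01 : 0 <= 0 <= 1) by lra. assert (I11 : 0 <= 1 <= 1) by lra.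
  assert (Gp : forall i, (i <= N)%nat -> 0 <= INR i / INR N <= 1) by (intros; apply grid_pt; auto).
  set (v := fun i j => psub (e (INR i / INR N)) (f (INR j / INR N))).
  assert (HH : forall i j, (i < N)%nat -> (j <= N)%nat -> 0 < dotp (v i j) (v (S i) j)).
  { intros i j Hi Hj. unfold v. apply Hg; repeat first [apply Gp; lia | apply Hst | apply Hz | assumption]. }
  assert (HV : forall i j, (i <= N)%nat -> (j < N)%nat -> 0 < dotp (v i j) (v i (S j))).
  { intros i j Hi Hj. unfold v. apply Hg; repeat first [apply Gp; lia | apply Hst | apply Hz | assumption]. }
  assert (T := grid_tele v N HH HV).
  assert (Rw : forall j, row v N j = theta N e (f (INR j / INR N))) by reflexivity.
  assert (Cl : forall i, col v N i = theta N f (e (INR i / INR N))).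
  { intros i. unfold col, theta. apply sumR_ext. intros j _. unfold v. apply parg_flip. }
  rewrite Rw, Rw, Cl, Cl, grid0, gridN in T by auto.
  assert (Ne : forall s t, 0 <= s <= 1 -> 0 <= t <= 1 -> psub (e s) (f t) <> (0,0)).
  { intros; apply psub_nz; auto. }
  assert (Nf : forall s t, 0 <= s <= 1 -> 0 <= t <= 1 -> psub (f t) (e s) <> (0,0)).
  { intros s t Hs Ht; apply psub_nz; intro E; apply (Hd s t Hs Ht); auto. }
  assert (Ee : forall t, 0 <= t <= 1 -> Eprop (theta N e (f t)) (psub (e 0) (f t)) (psub (e 1) (f t))).
  { intros t Ht. apply theta_E; auto. intros i Hi. apply Hg; repeat first [apply Gp; lia | apply Hst | apply Hz | assumption]. }
  assert (Ef : forall s, 0 <= s <= 1 -> Eprop (theta N f (e s)) (psub (f 0) (e s)) (psub (f 1) (e s))).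
  { intros s Hs. apply theta_E; auto. intros j Hj. rewrite dotp_flip. apply Hg; repeat first [apply Gp; lia | apply Hst | apply Hz | assumption]. }
  split; [exact T|].
  split; [apply ang_rel; auto|].
  split; [apply ang_rel; auto|].
  split; apply ang_rel; auto.
Qed.
Lemma pair_rel' e f a0 a1 b0 b1 : pc e -> pc f ->
  (forall s t, 0 <= s <= 1 -> 0 <= t <= 1 -> e s <> f t) ->
  e 0 = a0 -> e 1 = a1 -> f 0 = b0 -> f 1 = b1 ->
  exists N0, forall N, (N0 <= N)%nat -> (0 < N)%nat ->
  theta N e b1 - theta N e b0 - theta N f a1 + theta N f a0 = 0
  /\ in2piZ (theta N e b0 - (ang (psub a1 b0) - ang (psub a0 b0)))
  /\ in2piZ (theta N e b1 - (ang (psub a1 b1) - ang (psub a0 b1)))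
  /\ in2piZ (theta N f a0 - (ang (psub b1 a0) - ang (psub b0 a0)))
  /\ in2piZ (theta N f a1 - (ang (psub b1 a1) - ang (psub b0 a1))).
Proof. intros He Hf Hd <- <- <- <-. apply pair_rel; auto. Qed.

Lemma ang_neg' a b : a <> b -> in2piZ (ang (psub b a) - (ang (psub a b) + PI)).
Proof. intros H. rewrite (psub_anti a b). apply ang_neg. apply psub_nz; auto. Qed.

Lemma in01E t : in01 t <-> (0 <= t <= 1)%R.
Proof. unfold in01. split; intro H.
 - apply Bool.andb_true_iff in H. destruct H as [A B].
   split; apply (Bool.reflect_iff _ _ RleP); assumption.
 - apply Bool.andb_true_iff. destruct H as [A B]. split; apply (Bool.reflect_iff _ _ RleP); assumption.
Qed.

Lemma pc_of (g : R -> pt) : path_cont g -> pc g.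
Proof.
  intros H t Ht eps He.
  destruct (H t (proj2 (in01E t) Ht) eps (proj1 (Bool.reflect_iff _ _ RltP) He)) as [d Hd Hs].
  exists d. split. apply (Bool.reflect_iff _ _ RltP); exact Hd.
  intros s Hs' Hst. destruct (Hs s (proj2 (in01E s) Hs')) as [A B].
  apply (Bool.reflect_iff _ _ RltP); exact Hst.
  split; apply (Bool.reflect_iff _ _ RltP); assumption.
Qed.
Lemma odd_contra (k m : Z) : Z.odd m = true -> 2 * PI * IZR k = IZR m * PI -> False.
Proof.
  intros Ho H. pose proof PI_RGT_0.
  assert (2 * IZR k = IZR m) by (apply Rmult_eq_reg_r with PI; lra).
  rewrite <- mult_IZR in H1. apply eq_IZR in H1. subst m.
  rewrite Z.odd_mul in Ho. simpl in Ho. discriminate.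
Qed.
Lemma K33 (T : fintype.Finite.type) V e (a0 a1 a2 b0 b1 b2 : fintype.Finite.sort T) :
  a0 <> a1 ->
  a0 <> a2 ->
  a0 <> b0 ->
  a0 <> b1 ->
  a0 <> b2 ->
  a1 <> a2 ->
  a1 <> b0 ->
  a1 <> b1 ->
  a1 <> b2 ->
  a2 <> b0 ->
  a2 <> b1 ->
  a2 <> b2 ->
  b0 <> b1 ->
  b0 <> b2 ->
  b1 <> b2 ->
  is_true (e a0 b0) ->
  is_true (e a0 b1) ->
  is_true (e a0 b2) ->
  is_true (e a1 b0) ->
  is_true (e a1 b1) ->
  is_true (e a1 b2) ->
  is_true (e a2 b0) ->
  is_true (e a2 b1) ->
  is_true (e a2 b2) ->
  ~ planar V e.
Proof.
  intros n_a0_a1 n_a0_a2 n_a0_b0 n_a0_b1 n_a0_b2 n_a1_a2 n_a1_b0 n_a1_b1 n_a1_b2 n_a2_b0 n_a2_b1 n_a2_b2 n_b0_b1 n_b0_b2 n_b1_b2 h00 h01 h02 h10 h11 h12 h20 h21 h22 [fv [arc [_ [H2 H3]]]].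
  assert (Pc : forall u v, is_true (e u v) -> pc (arc u v) /\ arc u v 0 = fv u /\ arc u v 1 = fv v).
  { intros u v Huv. destruct (H2 u v Huv) as [C Z O _ _]. split; [apply pc_of; exact C| split; [exact Z| exact O]]. }
  assert (Dj : forall u v u' v', is_true (e u v) -> is_true (e u' v') -> u <> u' -> u <> v' -> v <> u' -> v <> v' ->
     forall s t, 0 <= s <= 1 -> 0 <= t <= 1 -> arc u v s <> arc u' v' t).
  { intros u v u' v' Huv Huv' m1 m2 m3 m4 s t Hs Ht Heq.
    destruct (H3 u v u' v' Huv Huv' ltac:(intros [[X _]|[X _]]; auto) s t (proj2 (in01E s) Hs) (proj2 (in01E t) Ht) Heq)
      as [w [[W1|W1] [W2|W2]] _]; congruence. }
  destruct (Pc a0 b0 h00) as [C00 [Z00 O00]].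
  destruct (Pc a0 b1 h01) as [C01 [Z01 O01]].
  destruct (Pc a0 b2 h02) as [C02 [Z02 O02]].
  destruct (Pc a1 b0 h10) as [C10 [Z10 O10]].
  destruct (Pc a1 b1 h11) as [C11 [Z11 O11]].
  destruct (Pc a1 b2 h12) as [C12 [Z12 O12]].
  destruct (Pc a2 b0 h20) as [C20 [Z20 O20]].
  destruct (Pc a2 b1 h21) as [C21 [Z21 O21]].
  destruct (Pc a2 b2 h22) as [C22 [Z22 O22]].
  destruct (pair_rel' (arc a0 b0) (arc a1 b1) (fv a0) (fv b0) (fv a1) (fv b1) C00 C11 (Dj a0 b0 a1 b1 h00 h11 ltac:(intro; congruence) ltac:(intro; congruence) ltac:(intro; congruence) ltac:(intro; congruence)) Z00 O00 Z11 O11) as [N0 HN0].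
  destruct (pair_rel' (arc a0 b0) (arc a1 b2) (fv a0) (fv b0) (fv a1) (fv b2) C00 C12 (Dj a0 b0 a1 b2 h00 h12 ltac:(intro; congruence) ltac:(intro; congruence) ltac:(intro; congruence) ltac:(intro; congruence)) Z00 O00 Z12 O12) as [N1 HN1].
  destruct (pair_rel' (arc a0 b0) (arc a2 b1) (fv a0) (fv b0) (fv a2) (fv b1) C00 C21 (Dj a0 b0 a2 b1 h00 h21 ltac:(intro; congruence) ltac:(intro; congruence) ltac:(intro; congruence) ltac:(intro; congruence)) Z00 O00 Z21 O21) as [N2 HN2].
  destruct (pair_rel' (arc a0 b0) (arc a2 b2) (fv a0) (fv b0) (fv a2) (fv b2) C00 C22 (Dj a0 b0 a2 b2 h00 h22 ltac:(intro; congruence) ltac:(intro; congruence) ltac:(intro; congruence) ltac:(intro; congruence)) Z00 O00 Z22 O22) as [N3 HN3].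
  destruct (pair_rel' (arc a0 b1) (arc a1 b0) (fv a0) (fv b1) (fv a1) (fv b0) C01 C10 (Dj a0 b1 a1 b0 h01 h10 ltac:(intro; congruence) ltac:(intro; congruence) ltac:(intro; congruence) ltac:(intro; congruence)) Z01 O01 Z10 O10) as [N4 HN4].
  destruct (pair_rel' (arc a0 b1) (arc a1 b2) (fv a0) (fv b1) (fv a1) (fv b2) C01 C12 (Dj a0 b1 a1 b2 h01 h12 ltac:(intro; congruence) ltac:(intro; congruence) ltac:(intro; congruence) ltac:(intro; congruence)) Z01 O01 Z12 O12) as [N5 HN5].
  destruct (pair_rel' (arc a0 b1) (arc a2 b0) (fv a0) (fv b1) (fv a2) (fv b0) C01 C20 (Dj a0 b1 a2 b0 h01 h20 ltac:(intro; congruence) ltac:(intro; congruence) ltac:(intro; congruence) ltac:(intro; congruence)) Z01 O01 Z20 O20) as [N6 HN6].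
  destruct (pair_rel' (arc a0 b1) (arc a2 b2) (fv a0) (fv b1) (fv a2) (fv b2) C01 C22 (Dj a0 b1 a2 b2 h01 h22 ltac:(intro; congruence) ltac:(intro; congruence) ltac:(intro; congruence) ltac:(intro; congruence)) Z01 O01 Z22 O22) as [N7 HN7].
  destruct (pair_rel' (arc a0 b2) (arc a1 b0) (fv a0) (fv b2) (fv a1) (fv b0) C02 C10 (Dj a0 b2 a1 b0 h02 h10 ltac:(intro; congruence) ltac:(intro; congruence) ltac:(intro; congruence) ltac:(intro; congruence)) Z02 O02 Z10 O10) as [N8 HN8].
  destruct (pair_rel' (arc a0 b2) (arc a1 b1) (fv a0) (fv b2) (fv a1) (fv b1) C02 C11 (Dj a0 b2 a1 b1 h02 h11 ltac:(intro; congruence) ltac:(intro; congruence) ltac:(intro; congruence) ltac:(intro; congruence)) Z02 O02 Z11 O11) as [N9 HN9].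
  destruct (pair_rel' (arc a0 b2) (arc a2 b0) (fv a0) (fv b2) (fv a2) (fv b0) C02 C20 (Dj a0 b2 a2 b0 h02 h20 ltac:(intro; congruence) ltac:(intro; congruence) ltac:(intro; congruence) ltac:(intro; congruence)) Z02 O02 Z20 O20) as [N10 HN10].
  destruct (pair_rel' (arc a0 b2) (arc a2 b1) (fv a0) (fv b2) (fv a2) (fv b1) C02 C21 (Dj a0 b2 a2 b1 h02 h21 ltac:(intro; congruence) ltac:(intro; congruence) ltac:(intro; congruence) ltac:(intro; congruence)) Z02 O02 Z21 O21) as [N11 HN11].
  destruct (pair_rel' (arc a1 b0) (arc a2 b1) (fv a1) (fv b0) (fv a2) (fv b1) C10 C21 (Dj a1 b0 a2 b1 h10 h21 ltac:(intro; congruence) ltac:(intro; congruence) ltac:(intro; congruence) ltac:(intro; congruence)) Z10 O10 Z21 O21) as [N12 HN12].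
  destruct (pair_rel' (arc a1 b0) (arc a2 b2) (fv a1) (fv b0) (fv a2) (fv b2) C10 C22 (Dj a1 b0 a2 b2 h10 h22 ltac:(intro; congruence) ltac:(intro; congruence) ltac:(intro; congruence) ltac:(intro; congruence)) Z10 O10 Z22 O22) as [N13 HN13].
  destruct (pair_rel' (arc a1 b1) (arc a2 b0) (fv a1) (fv b1) (fv a2) (fv b0) C11 C20 (Dj a1 b1 a2 b0 h11 h20 ltac:(intro; congruence) ltac:(intro; congruence) ltac:(intro; congruence) ltac:(intro; congruence)) Z11 O11 Z20 O20) as [N14 HN14].
  destruct (pair_rel' (arc a1 b1) (arc a2 b2) (fv a1) (fv b1) (fv a2) (fv b2) C11 C22 (Dj a1 b1 a2 b2 h11 h22 ltac:(intro; congruence) ltac:(intro; congruence) ltac:(intro; congruence) ltac:(intro; congruence)) Z11 O11 Z22 O22) as [N15 HN15].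
  destruct (pair_rel' (arc a1 b2) (arc a2 b0) (fv a1) (fv b2) (fv a2) (fv b0) C12 C20 (Dj a1 b2 a2 b0 h12 h20 ltac:(intro; congruence) ltac:(intro; congruence) ltac:(intro; congruence) ltac:(intro; congruence)) Z12 O12 Z20 O20) as [N16 HN16].
  destruct (pair_rel' (arc a1 b2) (arc a2 b1) (fv a1) (fv b2) (fv a2) (fv b1) C12 C21 (Dj a1 b2 a2 b1 h12 h21 ltac:(intro; congruence) ltac:(intro; congruence) ltac:(intro; congruence) ltac:(intro; congruence)) Z12 O12 Z21 O21) as [N17 HN17].
  set (N := (N0 + N1 + N2 + N3 + N4 + N5 + N6 + N7 + N8 + N9 + N10 + N11 + N12 + N13 + N14 + N15 + N16 + N17 + 1)%nat).
  destruct (HN0 N ltac:(unfold N; lia) ltac:(unfold N; lia)) as [Q0 [F0_1 [F0_2 [F0_3 F0_4]]]].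
  destruct (HN1 N ltac:(unfold N; lia) ltac:(unfold N; lia)) as [Q1 [F1_1 [F1_2 [F1_3 F1_4]]]].
  destruct (HN2 N ltac:(unfold N; lia) ltac:(unfold N; lia)) as [Q2 [F2_1 [F2_2 [F2_3 F2_4]]]].
  destruct (HN3 N ltac:(unfold N; lia) ltac:(unfold N; lia)) as [Q3 [F3_1 [F3_2 [F3_3 F3_4]]]].
  destruct (HN4 N ltac:(unfold N; lia) ltac:(unfold N; lia)) as [Q4 [F4_1 [F4_2 [F4_3 F4_4]]]].
  destruct (HN5 N ltac:(unfold N; lia) ltac:(unfold N; lia)) as [Q5 [F5_1 [F5_2 [F5_3 F5_4]]]].
  destruct (HN6 N ltac:(unfold N; lia) ltac:(unfold N; lia)) as [Q6 [F6_1 [F6_2 [F6_3 F6_4]]]].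
  destruct (HN7 N ltac:(unfold N; lia) ltac:(unfold N; lia)) as [Q7 [F7_1 [F7_2 [F7_3 F7_4]]]].
  destruct (HN8 N ltac:(unfold N; lia) ltac:(unfold N; lia)) as [Q8 [F8_1 [F8_2 [F8_3 F8_4]]]].
  destruct (HN9 N ltac:(unfold N; lia) ltac:(unfold N; lia)) as [Q9 [F9_1 [F9_2 [F9_3 F9_4]]]].
  destruct (HN10 N ltac:(unfold N; lia) ltac:(unfold N; lia)) as [Q10 [F10_1 [F10_2 [F10_3 F10_4]]]].
  destruct (HN11 N ltac:(unfold N; lia) ltac:(unfold N; lia)) as [Q11 [F11_1 [F11_2 [F11_3 F11_4]]]].
  destruct (HN12 N ltac:(unfold N; lia) ltac:(unfold N; lia)) as [Q12 [F12_1 [F12_2 [F12_3 F12_4]]]].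
  destruct (HN13 N ltac:(unfold N; lia) ltac:(unfold N; lia)) as [Q13 [F13_1 [F13_2 [F13_3 F13_4]]]].
  destruct (HN14 N ltac:(unfold N; lia) ltac:(unfold N; lia)) as [Q14 [F14_1 [F14_2 [F14_3 F14_4]]]].
  destruct (HN15 N ltac:(unfold N; lia) ltac:(unfold N; lia)) as [Q15 [F15_1 [F15_2 [F15_3 F15_4]]]].
  destruct (HN16 N ltac:(unfold N; lia) ltac:(unfold N; lia)) as [Q16 [F16_1 [F16_2 [F16_3 F16_4]]]].
  destruct (HN17 N ltac:(unfold N; lia) ltac:(unfold N; lia)) as [Q17 [F17_1 [F17_2 [F17_3 F17_4]]]].
  assert (D_a0_a1 : fv a0 <> fv a1) by (rewrite <- Z00, <- Z11; apply Dj; first [assumption | intro; congruence | lra]).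
  assert (G_a0_a1 := ang_neg' _ _ D_a0_a1).
  assert (D_a0_a2 : fv a0 <> fv a2) by (rewrite <- Z00, <- Z21; apply Dj; first [assumption | intro; congruence | lra]).
  assert (G_a0_a2 := ang_neg' _ _ D_a0_a2).
  assert (D_a0_b0 : fv a0 <> fv b0) by (rewrite <- Z01, <- O10; apply Dj; first [assumption | intro; congruence | lra]).
  assert (G_a0_b0 := ang_neg' _ _ D_a0_b0).
  assert (D_a0_b1 : fv a0 <> fv b1) by (rewrite <- Z00, <- O11; apply Dj; first [assumption | intro; congruence | lra]).
  assert (G_a0_b1 := ang_neg' _ _ D_a0_b1).
  assert (D_a0_b2 : fv a0 <> fv b2) by (rewrite <- Z00, <- O12; apply Dj; first [assumption | intro; congruence | lra]).
  assert (G_a0_b2 := ang_neg' _ _ D_a0_b2).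
  assert (D_a1_a2 : fv a1 <> fv a2) by (rewrite <- Z10, <- Z21; apply Dj; first [assumption | intro; congruence | lra]).
  assert (G_a1_a2 := ang_neg' _ _ D_a1_a2).
  assert (D_a1_b0 : fv a1 <> fv b0) by (rewrite <- Z11, <- O00; apply Dj; first [assumption | intro; congruence | lra]).
  assert (G_a1_b0 := ang_neg' _ _ D_a1_b0).
  assert (D_a1_b1 : fv a1 <> fv b1) by (rewrite <- Z10, <- O01; apply Dj; first [assumption | intro; congruence | lra]).
  assert (G_a1_b1 := ang_neg' _ _ D_a1_b1).
  assert (D_a1_b2 : fv a1 <> fv b2) by (rewrite <- Z10, <- O02; apply Dj; first [assumption | intro; congruence | lra]).
  assert (G_a1_b2 := ang_neg' _ _ D_a1_b2).
  assert (D_a2_b0 : fv a2 <> fv b0) by (rewrite <- Z21, <- O00; apply Dj; first [assumption | intro; congruence | lra]).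
  assert (G_a2_b0 := ang_neg' _ _ D_a2_b0).
  assert (D_a2_b1 : fv a2 <> fv b1) by (rewrite <- Z20, <- O01; apply Dj; first [assumption | intro; congruence | lra]).
  assert (G_a2_b1 := ang_neg' _ _ D_a2_b1).
  assert (D_a2_b2 : fv a2 <> fv b2) by (rewrite <- Z20, <- O02; apply Dj; first [assumption | intro; congruence | lra]).
  assert (G_a2_b2 := ang_neg' _ _ D_a2_b2).
  assert (D_b0_b1 : fv b0 <> fv b1) by (rewrite <- O00, <- O11; apply Dj; first [assumption | intro; congruence | lra]).
  assert (G_b0_b1 := ang_neg' _ _ D_b0_b1).
  assert (D_b0_b2 : fv b0 <> fv b2) by (rewrite <- O00, <- O12; apply Dj; first [assumption | intro; congruence | lra]).
  assert (G_b0_b2 := ang_neg' _ _ D_b0_b2).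
  assert (D_b1_b2 : fv b1 <> fv b2) by (rewrite <- O01, <- O12; apply Dj; first [assumption | intro; congruence | lra]).
  assert (G_b1_b2 := ang_neg' _ _ D_b1_b2).
  destruct (in2piZ_add _ _ (in2piZ_opp _ G_a2_b2) (in2piZ_add _ _ (in2piZ_opp _ G_a2_b2) (in2piZ_add _ _ (in2piZ_opp _ G_a2_b1) (in2piZ_add _ _ (in2piZ_opp _ G_a2_b1) (in2piZ_add _ _ (in2piZ_opp _ G_a2_b0) (in2piZ_add _ _ (in2piZ_opp _ G_a2_b0) (in2piZ_add _ _ (in2piZ_opp _ G_a1_a2) (in2piZ_add _ _ (in2piZ_opp _ G_a1_a2) (in2piZ_add _ _ (in2piZ_opp _ G_a1_a2) (in2piZ_add _ _ G_a0_b2 (in2piZ_add _ _ G_a0_b2 (in2piZ_add _ _ G_a0_b1 (in2piZ_add _ _ G_a0_b1 (in2piZ_add _ _ G_a0_b0 (in2piZ_add _ _ G_a0_b0 (in2piZ_add _ _ (in2piZ_opp _ G_a0_a2) (in2piZ_add _ _ (in2piZ_opp _ G_a0_a2) (in2piZ_add _ _ (in2piZ_opp _ G_a0_a2) (in2piZ_add _ _ (in2piZ_opp _ G_a0_a1) (in2piZ_add _ _ (in2piZ_opp _ G_a0_a1) (in2piZ_add _ _ (in2piZ_opp _ G_a0_a1) (in2piZ_add _ _ (in2piZ_opp _ F16_1) (in2piZ_add _ _ F14_3 (in2piZ_add _ _ (in2piZ_opp _ F14_1) (in2piZ_add _ _ F13_3 (in2piZ_add _ _ F12_3 (in2piZ_add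 _ _ (in2piZ_opp _ F12_1) (in2piZ_add _ _ (in2piZ_opp _ F11_4) (in2piZ_add _ _ (in2piZ_opp _ F10_4) (in2piZ_add _ _ (in2piZ_opp _ F10_1) (in2piZ_add _ _ F9_2 (in2piZ_add _ _ (in2piZ_opp _ F8_1) (in2piZ_add _ _ F8_2 (in2piZ_add _ _ (in2piZ_opp _ F7_4) (in2piZ_add _ _ F6_3 (in2piZ_add _ _ (in2piZ_opp _ F6_4) (in2piZ_add _ _ (in2piZ_opp _ F6_1) (in2piZ_add _ _ F5_2 (in2piZ_add _ _ F4_3 (in2piZ_add _ _ (in2piZ_opp _ F4_1) (in2piZ_add _ _ F4_2 (in2piZ_add _ _ F3_3 (in2piZ_add _ _ (in2piZ_opp _ F3_4) (in2piZ_add _ _ F2_3 (in2piZ_add _ _ (in2piZ_opp _ F2_4) (in2piZ_add _ _ (in2piZ_opp _ F2_1) (in2piZ_add _ _ F1_3 (in2piZ_add _ _ F1_2 (in2piZ_add _ _ F0_3 (in2piZ_add _ _ (in2piZ_opp _ F0_1) (in2piZ_add _ _ F0_2 in2piZ_0))))))))))))))))))))))))))))))))))))))))))))))))))) as [k Hk].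
  assert (HK : 2 * PI * IZR k = IZR (9) * PI) by lra.
  apply (odd_contra k (9)); [reflexivity| exact HK].
Qed.
Close Scope R_scope.
From mathcomp Require Import all_boot all_order all_algebra.
Set Implicit Arguments. Unset Strict Implicit. Unset Printing Implicit Defensive.
Import GRing.Theory.
Local Open Scope ring_scope.

Section LocalRing.
Variable S : finComNzRingType.
Variable J : {set S}.
Hypothesis HL : local_ring S.
Hypothesis HJ : proper_ideal_of J.

Definition nu (x : S) := ~~ [exists y : S, x * y == 1].

Lemma nuE x : (x \in [set x : S | ~~ [exists y : S, x * y == 1]]) = nu x.
Proof. by rewrite inE. Qed.

Lemma nu_mul s x : nu x -> nu (s * x).
Proof. case: HL => _ [_ H3] Hx. by rewrite -nuE; apply: H3; rewrite nuE. Qed.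

Lemma nu_add x y : nu x -> nu y -> nu (x + y).
Proof.
  case: HL => H1 [H2 _] Hx Hy.
  have Hny : nu (- y) by rewrite -nuE -sub0r; apply: H2 => //; rewrite nuE.
  by rewrite -nuE -(opprK y); apply: H2; rewrite nuE.
Qed.

Lemma nu1 : ~~ nu 1.
Proof. rewrite /nu negbK; apply/existsP; exists 1; by rewrite mulr1. Qed.

Lemma J_nu j : j \in J -> nu j.
Proof.
  move=> Hj; apply/negP => /existsP [y /eqP Hy].
  case: HJ => [[_ [_ H3]] HT]; move/negP: HT; apply; apply/eqP/setP => s.
  rewrite inE; have -> : s = (s * y) * j by rewrite -mulrA (mulrC y) Hy mulr1.
  exact: H3.
Qed.

Lemma one_notin : 1 \notin J.
Proof. by apply/negP => /J_nu H; move: nu1; rewrite H. Qed.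

Lemma xSJ_nu x z : nu x -> z \in xSJ J x -> nu z.
Proof.
  move=> Hx; rewrite inE => /existsP [s /existsP [j /andP [Hj /eqP ->]]].
  apply: nu_add; last exact: J_nu.
  by rewrite mulrC; apply: nu_mul.
Qed.

Lemma vert_nu x : x \in G2_vertices J -> nu x.
Proof.
  rewrite inE => /andP [_ H]; apply/negP => /existsP [y /eqP Hy].
  move/negP: H; apply; apply/eqP/setP => z; rewrite !inE.
  apply/existsP; exists (y * z); apply/existsP; exists 0.
  case: HJ => [[H0 _] _]; by rewrite H0 addr0 mulrA Hy mul1r eqxx.
Qed.

Lemma unit_add1 x : nu x -> ~~ nu (1 + x).
Proof.
  move=> Hx; apply/negP => H.
  have : nu (1 + x + - x).
  { apply: nu_add => //. by rewrite -(mulN1r x); apply: nu_mul. }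
  by rewrite addrK; apply/negP; exact: nu1.
Qed.

Lemma unit_notin u : ~~ nu u -> u \notin J.
Proof. by move=> Hu; apply/negP => /J_nu H; move: Hu; rewrite H. Qed.

Lemma vert_notin x : x \in G2_vertices J -> x \notin J.
Proof. by rewrite inE => /andP []. Qed.

Lemma vert_ne0 x : x \in G2_vertices J -> x != 0.
Proof.
  move=> /vert_notin H; apply/negP => /eqP E; move: H; rewrite E.
  by case: HJ => [[H0 _] _]; rewrite H0.
Qed.

End LocalRing.

Section Prod.
Variables R1 R2 : finComNzRingType.
Variables (I1 : {set R1}) (I2 : {set R2}).
Hypotheses (HL1 : local_ring R1) (HL2 : local_ring R2).
Hypotheses (HP1 : proper_ideal_of I1) (HP2 : proper_ideal_of I2).
Let I := (setX I1 I2 : {set (R1 * R2)%type}).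

Lemma xSJ_prod (a : R1 * R2) z : z \in xSJ I a ->
  z.1 \in xSJ I1 a.1 /\ z.2 \in xSJ I2 a.2.
Proof.
  rewrite inE => /existsP [s /existsP [j /andP [Hj /eqP ->]]].
  move: Hj; rewrite /I; case: j => j1 j2; rewrite in_setX => /andP [Hj1 Hj2].
  split; rewrite inE; apply/existsP; [exists s.1|exists s.2]; apply/existsP;
    [exists j1|exists j2]; by rewrite ?Hj1 ?Hj2 eqxx.
Qed.


Lemma vertA (a : R1) : nu a -> ((a, 1) : R1 * R2) \in G2_vertices I.
Proof.
  move=> Ha; rewrite inE; apply/andP; split.
  - by rewrite /I in_setX negb_and (one_notin HP2) orbT.
  - apply/negP => /eqP E. have : ((1, 1) : R1 * R2) \in xSJ I (a, 1) by rewrite E inE.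
    move=> /xSJ_prod [/= H _]. by move: (xSJ_nu HL1 HP1 Ha H); apply/negP; exact: nu1.
Qed.

Lemma vertB (u : R1) : ~~ nu u -> ((u, 0) : R1 * R2) \in G2_vertices I.
Proof.
  move=> Hu; rewrite inE; apply/andP; split.
  - by rewrite /I in_setX negb_and (unit_notin HP1 Hu).
  - apply/negP => /eqP E. have : ((1, 1) : R1 * R2) \in xSJ I (u, 0) by rewrite E inE.
    move=> /xSJ_prod [_ /= H]. move: H; rewrite inE => /existsP [s /existsP [j /andP [Hj /eqP E2]]].
    by move: E2 Hj; rewrite mul0r add0r => <-; apply/negP; exact: one_notin.
Qed.

Lemma adjAB (a u : R1) : nu a -> ~~ nu u -> G2_adj I (a, 1) (u, 0).
Proof.
  move=> Ha Hu; rewrite /G2_adj vertA // vertB //=.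
  apply/and3P; split.
  - by apply/negP => /eqP [_ /eqP]; rewrite oner_eq0.
  - apply/negP => /xSJ_prod [_ /= H]. move: H; rewrite inE => /existsP [s /existsP [j /andP [Hj /eqP E2]]].
    by move: E2 Hj; rewrite mul0r add0r => <-; apply/negP; exact: one_notin.
  - apply/negP => /xSJ_prod [/= H _]. by move: (xSJ_nu HL1 HP1 Ha H); apply/negP.
Qed.

Lemma vertA' (b : R2) : nu b -> ((1, b) : R1 * R2) \in G2_vertices I.
Proof.
  move=> Ha; rewrite inE; apply/andP; split.
  - by rewrite /I in_setX negb_and (one_notin HP1).
  - apply/negP => /eqP E. have : ((1, 1) : R1 * R2) \in xSJ I (1, b) by rewrite E inE.
    move=> /xSJ_prod [_ /= H]. by move: (xSJ_nu HL2 HP2 Ha H); apply/negP; exact: nu1.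
Qed.

Lemma vertB' (u : R2) : ~~ nu u -> ((0, u) : R1 * R2) \in G2_vertices I.
Proof.
  move=> Hu; rewrite inE; apply/andP; split.
  - by rewrite /I in_setX negb_and (unit_notin HP2 Hu) orbT.
  - apply/negP => /eqP E. have : ((1, 1) : R1 * R2) \in xSJ I (0, u) by rewrite E inE.
    move=> /xSJ_prod [/= H _]. move: H; rewrite inE => /existsP [s /existsP [j /andP [Hj /eqP E2]]].
    by move: E2 Hj; rewrite mul0r add0r => <-; apply/negP; exact: one_notin.
Qed.

Lemma adjAB' (b u : R2) : nu b -> ~~ nu u -> G2_adj I (1, b) (0, u).
Proof.
  move=> Ha Hu; rewrite /G2_adj vertA' // vertB' //=.
  apply/and3P; split.
  - by apply/negP => /eqP [/eqP]; rewrite oner_eq0.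
  - apply/negP => /xSJ_prod [/= H _]. move: H; rewrite inE => /existsP [s /existsP [j /andP [Hj /eqP E2]]].
    by move: E2 Hj; rewrite mul0r add0r => <-; apply/negP; exact: one_notin.
  - apply/negP => /xSJ_prod [_ /= H]. by move: (xSJ_nu HL2 HP2 Ha H); apply/negP.
Qed.
End Prod.
Theorem lemma3p8 (R1 R2 : finComNzRingType) (I1 : {set R1}) (I2 : {set R2}) :
  local_ring R1 -> local_ring R2 ->
  proper_ideal_of I1 -> proper_ideal_of I2 ->
  (1 < #|G2_vertices I1|)%N \/ (1 < #|G2_vertices I2|)%N ->
  ~ planar (G2_vertices (setX I1 I2 : {set (R1 * R2)%type}))
           (G2_adj (setX I1 I2 : {set (R1 * R2)%type})).
Proof.
  move=> HL1 HL2 HP1 HP2 [Hc|Hc].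
  - case/card_gt1P: Hc => x [x' [Hx Hx' Hxx']].
    have nx := vert_nu HP1 Hx. have nx' := vert_nu HP1 Hx'.
    have n0 : nu (0 : R1) by apply: (J_nu HP1); case: HP1 => [[H0 _] _].
    have u1 := @nu1 R1. have ux := unit_add1 HL1 nx. have ux' := unit_add1 HL1 nx'.
    have F1 : (0 : R1) != x by rewrite eq_sym; apply: (vert_ne0 HP1).
    have F2 : (0 : R1) != x' by rewrite eq_sym; apply: (vert_ne0 HP1).
    have F4 : (1 : R1) != 1 + x by rewrite -{1}(addr0 1) (inj_eq (addrI 1)).
    have F5 : (1 : R1) != 1 + x' by rewrite -{1}(addr0 1) (inj_eq (addrI 1)).
    have F6 : (1 : R1) + x != 1 + x' by rewrite (inj_eq (addrI 1)).
    have G : (1 : R2) != 0 by rewrite oner_eq0.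
    apply: (@K33 _ _ _ ((0, 1) : R1 * R2) (x, 1) (x', 1) (1, 0) (1 + x, 0) (1 + x', 0));
      try (by move=> /(f_equal snd) /= /eqP; rewrite (negbTE G));
      try (by move=> /(f_equal fst) /= /eqP; rewrite ?(negbTE F1) ?(negbTE F2) ?(negbTE Hxx') ?(negbTE F4) ?(negbTE F5) ?(negbTE F6));
      by apply: adjAB.
  - case/card_gt1P: Hc => x [x' [Hx Hx' Hxx']].
    have nx := vert_nu HP2 Hx. have nx' := vert_nu HP2 Hx'.
    have n0 : nu (0 : R2) by apply: (J_nu HP2); case: HP2 => [[H0 _] _].
    have u1 := @nu1 R2. have ux := unit_add1 HL2 nx. have ux' := unit_add1 HL2 nx'.
    have F1 : (0 : R2) != x by rewrite eq_sym; apply: (vert_ne0 HP2).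
    have F2 : (0 : R2) != x' by rewrite eq_sym; apply: (vert_ne0 HP2).
    have F4 : (1 : R2) != 1 + x by rewrite -{1}(addr0 1) (inj_eq (addrI 1)).
    have F5 : (1 : R2) != 1 + x' by rewrite -{1}(addr0 1) (inj_eq (addrI 1)).
    have F6 : (1 : R2) + x != 1 + x' by rewrite (inj_eq (addrI 1)).
    have G : (1 : R1) != 0 by rewrite oner_eq0.
    apply: (@K33 _ _ _ ((1, 0) : R1 * R2) (1, x) (1, x') (0, 1) (0, 1 + x) (0, 1 + x'));
      try (by move=> /(f_equal fst) /= /eqP; rewrite (negbTE G));
      try (by move=> /(f_equal snd) /= /eqP; rewrite ?(negbTE F1) ?(negbTE F2) ?(negbTE Hxx') ?(negbTE F4) ?(negbTE F5) ?(negbTE F6));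
      by apply: adjAB'.
Qed.
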